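(* Let $k>0$ be a constant, $p=k/n$, and $G\sim\mathcal{G}(n,p)$ with $m$ its number of edges. For $1\le u\le n$ define $$w_n(u)=\sum_{i=n-u}^{n}\binom{i}{i-(n-u)}(1-p)^{\binom{i-(n-u)}{2}}\,\mathbb{P}\left(m\ge\frac{n^2}{2u}-\frac{n}{2}\right).$$ Let $\lambda>1$ be the solution of $$2\ln 2-(k+1)+\lambda+(\lambda-1)\ln\frac{k}{\lambda-1}=0,$$ or equivalently $\lambda=1+k\left(1+\phi^{-1}\left(\frac{2}{k}\ln 2\right)\right)$ where $\phi(z)=(1+z)\ln(1+z)-z$. Then for any $u\le n/\lambda$, $w_n(u)$ is bounded by a polynomial in $n$.
   Context: $\mathcal{G}(n,p)$ is the binomial random graph on $n$ vertices in which each of the $\binom{n}{2}$ pairs of vertices is an edge with probability $p$, independently. $w_n(u)$ is the paper's bound on the expected number of nodes with potential $u$ in the best-first branch-and-bound search tree for maximum independent set (potential of a partial solution $S\subseteq\{v_1,\dots,v_i\}$ being $|S|+n-i$). *)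

(* Defs.v *)
From HB Require Import structures.
From mathcomp Require Import all_boot all_order all_algebra.
From mathcomp Require Import all_classical all_reals.
From mathcomp Require Import exp.
Set Implicit Arguments. Unset Strict Implicit. Unset Printing Implicit Defensive.
Import Order.TTheory GRing.Theory Num.Theory.
Local Open Scope ring_scope.

(* Potential edges of a graph on vertex set 'I_n: unordered pairs {i,j},
   represented as ordered pairs (i, j) with i < j. *)
Definition vpair (n : nat) := {x : 'I_n * 'I_n | (x.1 < x.2)%N}.

Definition graph (n : nat) := {set vpair n}.

Definition Gnp_prob {R : realType} (n : nat) (p : R) (A : pred (graph n)) : R :=
  \sum_(E : graph n | A E) p ^+ #|E| * (1 - p) ^+ (#|{: vpair n}| - #|E|).

Definition prob_edges_ge {R : realType} (n : nat) (p t : R) : R :=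
  @Gnp_prob R n p (fun E => t <= (#|E|)%:R).

Definition w {R : realType} (n u : nat) (p : R) : R :=
  \sum_((n - u)%N <= i < n.+1)
     ('C(i, i - (n - u)))%:R * (1 - p) ^+ 'C(i - (n - u), 2)
     * @prob_edges_ge R n p ((n%:R) ^+ 2 / (2 * u%:R) - n%:R / 2).

(* Main.v *)
Require Import Defs.
From HB Require Import structures.
From mathcomp Require Import all_boot all_order all_algebra.
From mathcomp Require Import all_classical all_reals.
From mathcomp Require Import exp.
From mathcomp Require Import sequences.
From mathcomp Require Import ring lra zify.
Import Order.TTheory GRing.Theory Num.Theory.
Local Open Scope ring_scope.

Lemma binom_sets (R : realType) (T : finType) (a b : R) :
  \sum_(E : {set T}) a ^+ #|E| * b ^+ (#|{: T}| - #|E|) = (a + b) ^+ #|{: T}|.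
Proof.
rewrite -prodr_const.
rewrite (@bigA_distr R 0 1 *%R +%R T (fun _ => a) (fun _ => b)).
apply: eq_bigr => E _.
apply/esym; rewrite (bigID (mem E)) /=; congr (_ * _).
  by rewrite (eq_bigr (fun _ => a)) ?prodr_const // => i ->.
rewrite (eq_bigr (fun _ => b)); last by move=> i /negbTE ->.
rewrite (eq_bigl (mem (~: E))); last by move=> i; rewrite /= !inE.
by rewrite prodr_const cardsCs finset.setCK.
Qed.

Lemma bin_le_pow2 i j : ('C(i, j) <= 2 ^ i)%N.
Proof.
elim: i j => [|i IH] [|j] //=.
  by rewrite bin0 expn_gt0.
by rewrite binS expnS mul2n -addnn leq_add.
Qed.

Lemma card_vpair n : (2 * #|{: vpair n}| <= n * n)%N.
Proof.
pose f (s : vpair n + vpair n) : 'I_n * 'I_n :=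
  match s with inl x => val x | inr x => ((val x).2, (val x).1) end.
have inj : injective f.
  case=> [[[a b] hab]|[[a b] hab]] [[[c d] hcd]|[[c d] hcd]] //= [] e1 e2; subst.
  - by congr inl; apply: val_inj.
  - by move: hab hcd => /= h1 h2; have := ltn_trans h1 h2; rewrite ltnn.
  - by move: hab hcd => /= h1 h2; have := ltn_trans h1 h2; rewrite ltnn.
  - by congr inr; apply: val_inj.
have := leq_card f inj.
by rewrite card_sum card_prod !card_ord addnn -mul2n.
Qed.

Lemma chernoff (R : realType) n (p t a r : R) : 0 <= p -> p <= 1 -> 1 <= r -> a <= t ->
  prob_edges_ge n p t <= expR (- (a * ln r)) * (1 + p * (r - 1)) ^+ #|{: vpair n}|.
Proof.
move=> p0 p1 r1 at_.
have r0 : 0 < r by apply: lt_le_trans r1.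
rewrite /prob_edges_ge /Gnp_prob.
pose N := #|{: vpair n}|.
pose f (E : graph n) := p ^+ #|E| * (1 - p) ^+ (N - #|E|).
have f0 E : 0 <= f E by rewrite mulr_ge0 // exprn_ge0 // subr_ge0.
apply: (@le_trans _ _ (\sum_(E : graph n) f E * expR ((#|E|%:R - a) * ln r))).
  rewrite [X in _ <= X](bigID (fun E : graph n => t <= #|E|%:R)) /=.
  apply: ler_wpDr; first by apply: sumr_ge0 => E _; rewrite mulr_ge0 ?expR_ge0.
  apply: ler_sum => E hE; apply: ler_peMr; first exact: f0.
  apply: (@le_trans _ _ (expR 0)); first by rewrite expR0.
  rewrite ler_expR mulr_ge0 ?ln_ge0 // subr_ge0.
  exact: le_trans at_ hE.
have -> : (1 + p * (r - 1)) = p * r + (1 - p) by ring.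
rewrite -binom_sets mulr_sumr.
rewrite le_eqVlt; apply/orP; left; apply/eqP; apply: eq_bigr => E _.
rewrite mulrBl expRD exprMn expRM_natl lnK ?posrE // /f /N; ring.
Qed.

Theorem proposition4 (R : realType) (k lam : R) :
  0 < k ->
  1 + k < lam ->
  2 * ln 2 - (k + 1) + lam + (lam - 1) * ln (k / (lam - 1)) = 0 ->
  exists (C : R) (d : nat), forall n u : nat,
    (1 <= u)%N -> u%:R <= n%:R / lam ->
    w n u (k / n%:R) <= C * (n%:R) ^+ d.
Proof.
move=> k0 hlam heq.
exists 2, 1%N => n u hu hun.
have lam1 : 1 < lam by lra.
have lam0 : 0 < lam by lra.
have u1 : 1 <= u%:R :> R by rewrite ler1n.
have u0 : 0 < u%:R :> R by lra.
have hnl : u%:R * lam <= n%:R by rewrite -ler_pdivlMr.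
have hn : lam <= n%:R by nra.
have n0 : 0 < n%:R :> R by lra.
set p := k / n%:R.
have p0 : 0 <= p by rewrite /p divr_ge0 // ltW.
have p1 : p <= 1 by rewrite /p ler_pdivrMr // mul1r; lra.
pose r : R := (lam - 1) / k.
have r1 : 1 <= r by rewrite /r ler_pdivlMr // mul1r; lra.
have r0 : 0 < r by lra.
pose a : R := n%:R * (lam - 1) / 2.
pose t : R := n%:R ^+ 2 / (2 * u%:R) - n%:R / 2.
have hnu : lam <= n%:R / u%:R by rewrite ler_pdivlMr // mulrC.
have hat : a <= t.
  have -> : t = n%:R / 2 * (n%:R / u%:R) - n%:R / 2.
    by rewrite /t; field; rewrite gt_eqF.
  rewrite /a; nra.
pose N := #|{: vpair n}|.
have hN : (N%:R * 2 <= n%:R * n%:R :> R).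
  by rewrite -natrM -natrM ler_nat mulnC card_vpair.
have eqr : ln (k / (lam - 1)) = - ln r.
  by rewrite /r -invf_div lnV // posrE.
rewrite eqr in heq.
set L := ln r in heq.
pose q : R := p * (r - 1).
have hq : q * n%:R = lam - 1 - k.
  by rewrite /q /p /r; field; rewrite !gt_eqF //; lra.
have q0 : 0 <= q by rewrite /q mulr_ge0 // subr_ge0.
have hP : prob_edges_ge n p t <= (2 ^+ n)^-1.
  apply: (le_trans (@chernoff R n p t a r p0 p1 r1 hat)).
  apply: (@le_trans _ _ (expR (- (a * L)) * expR q ^+ N)).
    apply: ler_wpM2l; first exact: expR_ge0.
    apply: lerXn2r; [by rewrite nnegrE addr_ge0 // mulr_ge0 // subr_ge0
                    | by rewrite nnegrE expR_ge0 | exact: expR_ge1Dx].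
  rewrite -expRM_natl -expRD.
  have -> : (2 ^+ n)^-1 = expR (- (n%:R * ln 2)) :> R.
    by rewrite expRN expRM_natl lnK // posrE.
  rewrite ler_expR /a.
  have hNq : N%:R * q * 2 <= n%:R * (lam - 1 - k) by rewrite -hq; nra.
  nra.
have P0 : 0 <= prob_edges_ge n p t.
  rewrite /prob_edges_ge /Gnp_prob; apply: sumr_ge0 => E _.
  by rewrite mulr_ge0 // exprn_ge0 // subr_ge0.
rewrite /w -/t.
apply: (@le_trans _ _ (\sum_((n - u)%N <= i < n.+1) (1 : R))).
  rewrite [X in X <= _]big_nat [X in _ <= X]big_nat.
  apply: ler_sum => i /andP[_ hi].
  have hc : ('C(i, i - (n - u)))%:R * (1 - p) ^+ 'C(i - (n - u), 2) <= 2 ^+ n.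
    apply: (@le_trans _ _ ('C(i, i - (n - u)))%:R).
      by apply: ler_piMr; [exact: ler0n | apply: exprn_ile1; lra].
    rewrite -natrX ler_nat; apply: leq_trans (bin_le_pow2 _ _) _.
    by rewrite leq_exp2l //; lia.
  apply: (@le_trans _ _ (2 ^+ n * prob_edges_ge n p t)).
    by apply: ler_wpM2r.
  apply: (@le_trans _ _ (2 ^+ n * (2 ^+ n)^-1)).
    by apply: ler_wpM2l; [exact: exprn_ge0 | exact: hP].
  by rewrite mulfV // gt_eqF // exprn_gt0.
rewrite sumr_const_nat expr1.
have hn1 : (0 < n)%N by rewrite -(ltr0n R).
have hle : (n.+1 - (n - u) <= 2 * n)%N.
  clear -hn1; move: hn1; rewrite subSn ?leq_subr // => h.
  apply: (@leq_trans n.+1); first by rewrite ltnS leq_subr.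
  by rewrite mul2n -addnn -addn1 leq_add2l.
apply: (@le_trans _ _ (2 * n)%:R); first by rewrite ler_nat.
by rewrite natrM.
Qed.
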